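(* Let $\mathcal{R}$ be a proper reflective subcategory of the category of groups. Then there is no non-trivial subfunctor $F$ of the identity functor on the category of groups such that $F(G)\in\mathcal{R}$ for every group $G$.
   Context: A full subcategory $\mathcal{R}$ of the category of groups is reflective if the inclusion functor has a left adjoint. It is proper if it is closed under isomorphisms and not equal to the whole category of groups. A subfunctor $F$ of the identity functor assigns to each group $G$ a subgroup $F(G)\subseteq G$ with $f(F(G))\subseteq F(G')$ for every homomorphism $f:G\to G'$; it is non-trivial if $F(G)\neq 1$ for some $G$. *)

(* Defs.v *)
From Stdlib Require Import ProofIrrelevance.

Set Implicit Arguments.

Record Group := {
  carrier :> Type;
  gmul : carrier -> carrier -> carrier;
  gone : carrier;
  ginv : carrier -> carrier;
  gmulA : forall x y z, gmul x (gmul y z) = gmul (gmul x y) z;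
  gmul1l : forall x, gmul gone x = x;
  gmul1r : forall x, gmul x gone = x;
  gmulVl : forall x, gmul (ginv x) x = gone;
  gmulVr : forall x, gmul x (ginv x) = gone
}.

Arguments gmul {g}.
Arguments gone {g}.
Arguments ginv {g}.

Record hom (G H : Group) := {
  hfun :> G -> H;
  hmul : forall x y, hfun (gmul x y) = gmul (hfun x) (hfun y)
}.

Definition isomorphic (G H : Group) : Prop :=
  exists (f : hom G H) (g : hom H G),
    (forall x, g (f x) = x) /\ (forall y, f (g y) = y).

(* A full subcategory of Grp is given by a predicate on groups. *)
Definition iso_closed (R : Group -> Prop) : Prop :=
  forall G H, R G -> isomorphic G H -> R H.

Definition proper_subcat (R : Group -> Prop) : Prop :=
  iso_closed R /\ exists G, ~ R G.

(* Reflective: the inclusion has a left adjoint, i.e. every group G has a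
   reflection (universal arrow) eta : G -> L G with L G in R. *)
Definition reflective (R : Group -> Prop) : Prop :=
  forall G : Group, exists (L : Group) (eta : hom G L),
    R L /\
    forall H : Group, R H -> forall f : hom G H,
      (exists g : hom L H, forall x, g (eta x) = f x) /\
      (forall g1 g2 : hom L H,
         (forall x, g1 (eta x) = g2 (eta x)) -> forall y, g1 y = g2 y).

Record subgroup (G : Group) := {
  smem : G -> Prop;
  smem1 : smem gone;
  smemM : forall {x y}, smem x -> smem y -> smem (gmul x y);
  smemV : forall {x}, smem x -> smem (ginv x)
}.

Section SubgroupGroup.
Variables (G : Group) (S : subgroup G).

Definition sg_car := { x : G | smem S x }.

Definition sg_mul (a b : sg_car) : sg_car :=
  exist _ (gmul (proj1_sig a) (proj1_sig b))
        (smemM S (proj2_sig a) (proj2_sig b)).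
Definition sg_one : sg_car := exist _ gone (smem1 S).
Definition sg_inv (a : sg_car) : sg_car :=
  exist _ (ginv (proj1_sig a)) (smemV S (proj2_sig a)).

Lemma sg_eq (a b : sg_car) : proj1_sig a = proj1_sig b -> a = b.
Proof.
destruct a as [a pa], b as [b pb]; simpl; intros ->.
f_equal; apply proof_irrelevance.
Qed.

Lemma sg_mulA x y z : sg_mul x (sg_mul y z) = sg_mul (sg_mul x y) z.
Proof. apply sg_eq; simpl; apply gmulA. Qed.
Lemma sg_mul1l x : sg_mul sg_one x = x.
Proof. apply sg_eq; simpl; apply gmul1l. Qed.
Lemma sg_mul1r x : sg_mul x sg_one = x.
Proof. apply sg_eq; simpl; apply gmul1r. Qed.
Lemma sg_mulVl x : sg_mul (sg_inv x) x = sg_one.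
Proof. apply sg_eq; simpl; apply gmulVl. Qed.
Lemma sg_mulVr x : sg_mul x (sg_inv x) = sg_one.
Proof. apply sg_eq; simpl; apply gmulVr. Qed.

Definition subgroup_group : Group :=
  {| carrier := sg_car; gmul := sg_mul; gone := sg_one; ginv := sg_inv;
     gmulA := sg_mulA; gmul1l := sg_mul1l; gmul1r := sg_mul1r;
     gmulVl := sg_mulVl; gmulVr := sg_mulVr |}.
End SubgroupGroup.

Definition is_subfunctor (F : forall G : Group, subgroup G) : Prop :=
  forall (G G' : Group) (f : hom G G') (x : G),
    smem (F G) x -> smem (F G') (f x).

Definition nontrivial_subfunctor (F : forall G : Group, subgroup G) : Prop :=
  exists (G : Group) (x : G), smem (F G) x /\ x <> gone.

(* Main.v *)
Require Import Defs.
From Stdlib Require Import ZArith Lia FunctionalExtensionality ClassicalEpsilon ProofIrrelevance.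
Set Implicit Arguments.


Arguments gmulA {g} x y z.
Arguments gmul1l {g} x.
Arguments gmul1r {g} x.
Arguments gmulVl {g} x.
Arguments gmulVr {g} x.

Section GL.
Variable G : Group.
Lemma inv_unique (x y : G) : gmul x y = gone -> y = ginv x.
Proof.
  intro E. rewrite <- (gmul1l y), <- (gmulVl x), <- gmulA, E, gmul1r. reflexivity.
Qed.
Lemma ginv_one : ginv (gone : G) = gone.
Proof. symmetry; apply inv_unique, gmul1l. Qed.
Lemma ginv_inv (x : G) : ginv (ginv x) = x.
Proof. symmetry; apply inv_unique, gmulVl. Qed.
Lemma ginv_mul (x y : G) : ginv (gmul x y) = gmul (ginv y) (ginv x).
Proof.
  symmetry; apply inv_unique.
  rewrite <- gmulA, (gmulA y), gmulVr, gmul1l, gmulVr. reflexivity.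
Qed.
End GL.

Lemma hom_one (G H : Group) (f : hom G H) : f gone = gone.
Proof.
  assert (E : gmul (f gone) (f gone) = gmul (f gone) gone).
  { rewrite <- hmul, gmul1l, gmul1r. reflexivity. }
  rewrite <- (gmul1l (f gone)), <- (gmulVl (f gone)), <- gmulA, E, gmul1r, gmulVl.
  reflexivity.
Qed.
Lemma hom_inv (G H : Group) (f : hom G H) (x : G) : f (ginv x) = ginv (f x).
Proof. apply inv_unique. rewrite <- hmul, gmulVr. apply hom_one. Qed.

Definition hcomp (A B C : Group) (g : hom B C) (f : hom A B) : hom A C.
Proof. refine {| hfun := fun x => g (f x) |}. intros; rewrite !hmul; reflexivity. Defined.
Definition htriv (A B : Group) : hom A B.
Proof. refine {| hfun := fun _ => gone |}. intros; rewrite gmul1l; reflexivity. Defined.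
Definition hid (A : Group) : hom A A.
Proof. refine {| hfun := fun x => x |}. reflexivity. Defined.

Lemma key (R : Group -> Prop) (Hiso : iso_closed R) (Hrefl : reflective R)
  (A0 A1 H : Group) (HA0 : R A0) (HA1 : R A1) (p : hom A0 A1) (i : hom H A0)
  (r : A0 -> H) (Hi : forall h, p (i h) = gone) (Hri : forall h, r (i h) = h)
  (Hr : forall x y, p x = gone -> p y = gone -> r (gmul x y) = gmul (r x) (r y)) : R H.
Proof.
  destruct (Hrefl H) as [L [eta [RL Hu]]].
  destruct (Hu A0 HA0 i) as [[k Hk] _].
  assert (kker : forall y, p (k y) = gone).
  { intro y. destruct (Hu A1 HA1 (htriv H A1)) as [_ U].
    apply (U (hcomp p k) (htriv L A1)). intro x. simpl. rewrite Hk. apply Hi. }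
  set (g := {| hfun := fun y => r (k y);
               hmul := fun y y' => eq_trans (f_equal r (hmul k y y')) (Hr _ _ (kker y) (kker y')) |}
          : hom L H).
  apply (Hiso L H RL).
  exists g, eta. split.
  - intro y. destruct (Hu L RL eta) as [_ U].
    apply (U (hcomp eta g) (hid L)). intro x. simpl. rewrite Hk, Hri. reflexivity.
  - intro x. simpl. rewrite Hk. apply Hri.
Qed.


Definition Zgroup : Group.
Proof.
  refine {| carrier := Z; gmul := Z.add; gone := 0%Z; ginv := Z.opp |};
  intros; lia.
Defined.

Section Wreath.
Variables (M K : Group) (I : Type) (act : I -> K -> I).
Hypotheses (act1 : forall a, act a gone = a)
           (actM : forall a g g', act (act a g) g' = act a (gmul g g')).
Definition wr_car := ((I -> M) * K)%type.
Definition wr_mul (x y : wr_car) : wr_car :=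
  (fun a => gmul (fst x a) (fst y (act a (snd x))), gmul (snd x) (snd y)).
Definition wr_one : wr_car := (fun _ => gone, gone).
Definition wr_inv (x : wr_car) : wr_car :=
  (fun a => ginv (fst x (act a (ginv (snd x)))), ginv (snd x)).
Lemma wr_mulA x y z : wr_mul x (wr_mul y z) = wr_mul (wr_mul x y) z.
Proof.
  destruct x as [f g], y as [f' g'], z as [f'' g'']; unfold wr_mul; simpl.
  f_equal. 2: apply gmulA. extensionality a. rewrite actM, gmulA. reflexivity.
Qed.
Lemma wr_mul1l x : wr_mul wr_one x = x.
Proof.
  destruct x as [f g]; unfold wr_mul; simpl. f_equal. 2: apply gmul1l.
  extensionality a. rewrite act1, gmul1l. reflexivity.
Qed.
Lemma wr_mul1r x : wr_mul x wr_one = x.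
Proof.
  destruct x as [f g]; unfold wr_mul; simpl. f_equal. 2: apply gmul1r.
  extensionality a. rewrite gmul1r. reflexivity.
Qed.
Lemma wr_mulVl x : wr_mul (wr_inv x) x = wr_one.
Proof.
  destruct x as [f g]; unfold wr_mul, wr_inv, wr_one; simpl. f_equal. 2: apply gmulVl.
  extensionality a. apply gmulVl.
Qed.
Lemma wr_mulVr x : wr_mul x (wr_inv x) = wr_one.
Proof.
  destruct x as [f g]; unfold wr_mul, wr_inv, wr_one; simpl. f_equal. 2: apply gmulVr.
  extensionality a. rewrite actM, gmulVr, act1. apply gmulVr.
Qed.
Definition wreath : Group :=
  {| carrier := wr_car; gmul := wr_mul; gone := wr_one; ginv := wr_inv;
     gmulA := wr_mulA; gmul1l := wr_mul1l; gmul1r := wr_mul1r;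
     gmulVl := wr_mulVl; gmulVr := wr_mulVr |}.
End Wreath.

Fixpoint npow {H : Group} (h : H) (n : nat) : H :=
  match n with O => gone | S n => gmul (npow h n) h end.
Lemma npow_comm {H : Group} (h : H) n : gmul (npow h n) h = gmul h (npow h n).
Proof.
  induction n; simpl. rewrite gmul1l, gmul1r; reflexivity.
  rewrite IHn at 1. rewrite gmulA. reflexivity.
Qed.
Definition zpow {H : Group} (h : H) (k : Z) : H :=
  if Z_le_dec 0 k then npow h (Z.to_nat k) else ginv (npow h (Z.to_nat (- k))).
Lemma zpow_succ (H : Group) (h : H) k : zpow h (k + 1) = gmul h (zpow h k).
Proof.
  unfold zpow. destruct (Z_le_dec 0 (k+1)), (Z_le_dec 0 k); try lia.
  - replace (Z.to_nat (k+1)) with (S (Z.to_nat k)) by lia. apply npow_comm.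
  - assert (k = -1)%Z by lia; subst. simpl. rewrite gmul1l, gmulVr. reflexivity.
  - replace (Z.to_nat (- k)) with (S (Z.to_nat (- (k+1)))) by lia. simpl.
    rewrite ginv_mul, gmulA, gmulVr, gmul1l. reflexivity.
Qed.
Lemma zpow_comm (H : Group) (h : H) k : gmul (zpow h k) h = gmul h (zpow h k).
Proof.
  unfold zpow. destruct (Z_le_dec 0 k) as [Hk|Hk]. apply npow_comm.
  pose proof (f_equal ginv (npow_comm h (Z.to_nat (-k)))) as E.
  rewrite !ginv_mul in E.
  set (n := npow h (Z.to_nat (-k))) in *.
  assert (E2 : gmul h (gmul (gmul (ginv n) (ginv h)) h) = gmul h (gmul (gmul (ginv h) (ginv n)) h)) by (rewrite E; reflexivity).
  rewrite <- !gmulA, gmulVl, gmul1r, !gmulA, gmulVr, gmul1l in E2. symmetry. exact E2.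
Qed.


Definition conj {G : Group} (w x : G) := gmul w (gmul x (ginv w)).
Definition comm {G : Group} (w x : G) := gmul (conj w x) (ginv x).

Section WG.
Variables (M K : Group) (I : Type) (act : I -> K -> I).
Hypotheses (act1 : forall a, act a gone = a)
           (actM : forall a g g', act (act a g) g' = act a (gmul g g')).
Let W := wreath M K act act1 actM.

Lemma comm_base_gen (phi : I -> M) (g : K) :
  @comm W (phi, gone) (fun _ => gone, g) = (fun a => gmul (phi a) (ginv (phi (act a g))), gone).
Proof.
  unfold comm, conj; cbn. unfold wr_mul, wr_inv; cbn.
  f_equal. extensionality a. rewrite !ginv_one, !act1, !gmul1l, !gmul1r. reflexivity.
  rewrite !ginv_one, !gmul1l, !gmul1r, gmulVr. reflexivity.
Qed.

Lemma comm_base2 (s p : I -> M) :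
  @comm W (s, gone) (p, gone) = (fun a => comm (s a) (p a), gone).
Proof.
  unfold comm, conj; cbn. unfold wr_mul, wr_inv; cbn.
  f_equal. extensionality a. rewrite !ginv_one, !gmul1l, !act1. reflexivity.
  rewrite !ginv_one, !gmul1l. reflexivity.
Qed.
End WG.

Lemma comm_one (G : Group) (w : G) : comm w gone = gone.
Proof. unfold comm, conj. rewrite ginv_one, gmul1l, gmul1r, gmulVr. reflexivity. Qed.

Definition Mgrp (H : Group) : Group :=
  wreath H Zgroup (fun a n => (a + n)%Z) (fun a => Z.add_0_r a)
    (fun a g g' => eq_sym (Z.add_assoc a g g')).
Definition Wgrp (M G0 : Group) : Group :=
  wreath M G0 (fun a g => gmul a g) (fun a => gmul1r a)
    (fun a g g' => eq_sym (gmulA a g g')).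

Section Main.
Variables (H G0 : Group) (x0 : G0).
Hypothesis hx0 : x0 <> gone.
Let M := Mgrp H.
Let W := Wgrp M G0.

Definition tM : M := (fun _ => gone, 1%Z).
Definition chM (h : H) : M := (fun _ => h, 0%Z).
Definition shM (h : H) : M := (fun k => zpow h (- k), 0%Z).
Definition sh'M (h : H) : M := (fun k => zpow h k, 0%Z).

Lemma comm_sh h : comm (shM h) tM = chM h.
Proof.
  unfold comm, conj; cbn. unfold wr_mul, wr_inv, chM; cbn. f_equal.
  extensionality k. replace (- (k + 0 + 1 + 0))%Z with (- k - 1)%Z by lia.
  replace (- k)%Z with ((- k - 1) + 1)%Z at 1 by lia.
  rewrite zpow_succ, ginv_one, gmul1l, gmul1r, <- gmulA, gmulVr, gmul1r. reflexivity.
Qed.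

Lemma comm_sh' h : comm (sh'M h) (ginv tM) = chM h.
Proof.
  unfold comm, conj; cbn. unfold wr_mul, wr_inv, chM; cbn. f_equal.
  extensionality k. replace (k + 0 + -1 + 0)%Z with (k - 1)%Z by lia.
  replace k with ((k - 1) + 1)%Z at 1 by lia.
  rewrite zpow_succ, !ginv_one, gmul1l, gmul1r, <- gmulA, gmulVr, gmul1r. reflexivity.
Qed.


Definition dec (P : Prop) : {P} + {~ P} := excluded_middle_informative P.

Definition phi1 (a : G0) : M := if dec (a = gone) then tM else gone.
Definition sigma (h : H) (a : G0) : M :=
  if dec (a = gone) then shM h else if dec (a = ginv x0) then sh'M h else gone.
Definition eW (h : H) : W :=
  (fun a => if dec (a = gone) then chM h else if dec (a = ginv x0) then chM h else gone, gone).
Definition XW : W := (fun _ => gone, x0).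

Lemma eW_eq h : eW h = comm ((sigma h, gone) : W) (comm ((phi1, gone) : W) XW).
Proof.
  unfold XW, W, Wgrp. rewrite comm_base_gen, comm_base2. unfold eW. f_equal.
  extensionality a. unfold sigma, phi1.
  destruct (dec (a = gone)) as [E1|E1].
  - subst a. rewrite gmul1l. destruct (dec (x0 = gone)); [contradiction|].
    rewrite ginv_one, gmul1r. symmetry. apply comm_sh.
  - destruct (dec (a = ginv x0)) as [E2|E2].
    + subst a. rewrite gmulVl. destruct (dec (gone = gone)); [|congruence].
      rewrite gmul1l. symmetry. apply comm_sh'.
    + destruct (dec (gmul a x0 = gone)) as [E3|E3].
      * exfalso. apply E2. apply (f_equal (fun z => gmul z (ginv x0))) in E3.
        rewrite <- gmulA, gmulVr, gmul1r, gmul1l in E3. exact E3.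
      * rewrite ginv_one, gmul1r. symmetry. apply comm_one.
Qed.

Lemma eW_mul h k : eW (gmul h k) = gmul (eW h) (eW k).
Proof.
  unfold eW; cbn. unfold wr_mul; cbn. f_equal. 2: symmetry; apply gmul1l.
  extensionality a. rewrite gmul1r.
  destruct (dec (a = gone)); [|destruct (dec (a = ginv x0))];
  unfold chM; cbn; unfold wr_mul; cbn; f_equal.
  rewrite gmul1l; reflexivity.
Qed.

Let V := Wgrp Zgroup G0.
Definition piW_fun (x : W) : V := (fun a => snd (fst x a), snd x).
Definition piW : hom W V.
Proof. refine {| hfun := piW_fun |}. intros [f g] [f' g']. reflexivity. Defined.

Lemma piW_eW h : piW (eW h) = gone.
Proof.
  cbn. unfold piW_fun, eW, wr_one; cbn. f_equal. extensionality a.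
  destruct (dec (a = gone)); [|destruct (dec (a = ginv x0))]; reflexivity.
Qed.

Definition iotaW : hom G0 W.
Proof.
  refine {| hfun := fun g => ((fun _ => gone, g) : W) |}.
  intros g g'. cbn. unfold wr_mul; cbn. f_equal. extensionality a. exact (eq_sym (@gmul1l M gone)).
Defined.
End Main.


Definition conj_hom {G : Group} (w : G) : hom G G.
Proof.
  refine {| hfun := fun x => conj w x |}. intros x y. unfold conj.
  rewrite <- !gmulA. f_equal. rewrite !gmulA, <- (gmulA x (ginv w) w), gmulVl, gmul1r.
  rewrite <- !gmulA. reflexivity.
Defined.

Lemma F_comm (F : forall G : Group, subgroup G) (HF : is_subfunctor F) (G : Group) (w x : G) :
  smem (F G) x -> smem (F G) (comm w x).
Proof.
  intro Hx. unfold comm. apply smemM. apply (HF G G (conj_hom w) x Hx). apply smemV; exact Hx.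
Qed.

Definition mk_i (H W : Group) (S : subgroup W) (e : H -> W) (Hm : forall h, smem S (e h))
  (He : forall h k, e (gmul h k) = gmul (e h) (e k)) : hom H (subgroup_group S).
Proof.
  refine {| hfun := fun h => (exist _ (e h) (Hm h) : subgroup_group S) |}.
  intros h k. apply sg_eq. apply He.
Defined.
Definition mk_p (W V : Group) (S : subgroup W) (S' : subgroup V) (f : hom W V)
  (Hf : forall x, smem S x -> smem S' (f x)) : hom (subgroup_group S) (subgroup_group S').
Proof.
  refine {| hfun := fun x : subgroup_group S =>
                  (exist _ (f (proj1_sig x)) (Hf _ (proj2_sig x)) : subgroup_group S') |}.
  intros x y. apply sg_eq. apply (hmul f (proj1_sig x) (proj1_sig y)).
Defined.

Theorem theorem3p10 (R : Group -> Prop)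
  (Hproper : proper_subcat R) (Hrefl : reflective R) :
  ~ exists F : forall G : Group, subgroup G,
      is_subfunctor F /\ nontrivial_subfunctor F /\
      forall G : Group, R (subgroup_group (F G)).
Proof.
  intros [F [Hsub [[G0 [x0 [Hx0 Hne]]] HR]]].
  destruct Hproper as [Hiso [H HnR]]. apply HnR.
  pose (W := Wgrp (Mgrp H) G0). pose (V := Wgrp Zgroup G0).
  assert (HX : smem (F W) (XW H G0 x0)) by exact (Hsub G0 W (iotaW H G0) x0 Hx0).
  assert (Hmem : forall h, smem (F W) (eW H G0 x0 h)).
  { intro h. rewrite (@eW_eq H G0 x0 Hne). apply F_comm; auto. apply F_comm; auto. }
  pose (i := @mk_i H W (F W) _ Hmem (eW_mul H G0 x0)).
  pose (p := @mk_p W V (F W) (F V) (piW H G0) (Hsub W V (piW H G0))).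
  apply (key Hiso Hrefl (HR W) (HR V) p i (fun x => fst (fst (proj1_sig x) gone) 0%Z)).
  - intro h. apply sg_eq. apply (piW_eW H G0 x0).
  - intro h. cbn. unfold eW. destruct (dec (gone = gone)); [reflexivity|congruence].
  - intros [[f g] Hxy] [[f' g'] Hy] E1 E2.
    apply (f_equal (@proj1_sig _ _)) in E1. apply (f_equal (@proj1_sig _ _)) in E2.
    cbn in E1, E2 |- *. unfold piW_fun, wr_one in E1, E2. cbn in E1, E2.
    pose proof (f_equal snd E1) as Eg. cbn in Eg.
    pose proof (f_equal (fun z => fst z gone) E1) as Ef. cbn in Ef.
    subst g. rewrite gmul1l. rewrite Ef. reflexivity.
Qed.
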